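(* For every integer $r\ge0$, $$ \begin{aligned} \sum_{n=1}^\infty\frac{(-1)^{n-1}}{n}\int_0^{\frac\pi 2}\theta^r\cos(n\theta)\,d\theta &=\sum_{k=0}^{\lfloor \frac{r}{2}\rfloor }(-1)^k(2k)!\binom{r}{2k}\left(\frac\pi2\right)^{r-2k}\beta(2k+2) \\ &\quad+\sum_{k=1}^{\lceil \frac{r}2\rceil}\frac{(-1)^{k-1}(2k-1)!}{2^{2k+1}}\binom{r}{2k-1}\left(\frac\pi2\right)^{r-2k+1}\zeta_E(2k+1) \\ &\quad-r!\sin\left(\frac{r\pi}{2}\right)\zeta_E(r+2). \end{aligned} $$
   Context: $\zeta_E(s)=\sum_{n=1}^\infty\frac{(-1)^{n+1}}{n^s}$, $\beta(s)=\sum_{n=0}^\infty\frac{(-1)^n}{(2n+1)^s}$; $\lfloor\cdot\rfloor,\lceil\cdot\rceil$ are floor and ceiling; empty sums are $0$. *)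

(* Defs.v *)
From Stdlib Require Import Reals.
From Coquelicot Require Import Coquelicot.
Open Scope R_scope.

(* Dirichlet eta function: zeta_E(s) = sum_{n>=1} (-1)^(n+1) / n^s  (index shifted: n -> n+1). *)
Definition zetaE (s : R) : R :=
  Series (fun n : nat => (-1) ^ n / Rpower (INR n + 1) s).

Definition dbeta (s : R) : R :=
  Series (fun n : nat => (-1) ^ n / Rpower (2 * INR n + 1) s).

(* Main.v *)
Require Import Defs.
From Stdlib Require Import Reals Arith Lia Lra.
From Coquelicot Require Import Coquelicot.
Open Scope R_scope.

Lemma tele_series (u : nat -> R) (l : R) :
  is_lim_seq u l -> is_series (fun n => u n - u (S n)) (u O - l).
Proof.
  intros H.
  assert (E : forall N, sum_n (fun n => u n - u (S n)) N = u O - u (S N)).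
  { induction N. rewrite sum_O. reflexivity.
    rewrite sum_Sn, IHN. unfold plus; simpl. ring. }
  change (is_lim_seq (sum_n (fun n => u n - u (S n))) (u O - l)).
  apply (is_lim_seq_ext (fun N => u O - u (S N))). { intros; now rewrite E. }
  apply (is_lim_seq_minus _ _ (u O) l). apply is_lim_seq_const.
  now apply -> is_lim_seq_incr_1. reflexivity.
Qed.

Lemma ex_series_inv_sq : ex_series (fun n => / (INR n + 1) ^ 2).
Proof.
  apply (@ex_series_le R_AbsRing R_CompleteNormedModule _ (fun n => 2 * (/ (INR n + 1) - / (INR (S n) + 1)))).
  - intros n. rewrite S_INR. pose proof (pos_INR n).
    unfold norm; simpl. rewrite Rabs_pos_eq.
    2:{ apply Rlt_le, Rinv_0_lt_compat; nra. }
    apply (Rmult_le_reg_l ((INR n + 1)^2 * (INR n + 1 + 1))). apply Rmult_lt_0_compat; [apply pow_lt|]; lra.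
    field_simplify; try lra.
  - unfold ex_series. eexists. apply (is_series_scal_l 2 (fun n => / (INR n + 1) - / (INR (S n) + 1))).
    apply (tele_series (fun n => / (INR n + 1)) 0).
    replace (Finite 0) with (Rbar_inv p_infty) by reflexivity.
    apply is_lim_seq_inv. eapply is_lim_seq_plus. apply is_lim_seq_INR.
    apply is_lim_seq_const. reflexivity. discriminate.
Qed.

Lemma ex_series_pow (p : nat) (c : nat -> R) : (2 <= p)%nat ->
  (forall n, Rabs (c n) <= 1) ->
  ex_series (fun n => c n / (INR n + 1) ^ p).
Proof.
  intros Hp Hc.
  apply (@ex_series_le R_AbsRing R_CompleteNormedModule _ (fun n => / (INR n + 1) ^ 2)).
  2: apply ex_series_inv_sq.
  intros n. unfold norm; simpl. pose proof (pos_INR n).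
  assert (H1 : 1 <= INR n + 1) by lra.
  assert (H2 : (INR n + 1) ^ 2 <= (INR n + 1) ^ p).
  { replace p with (2 + (p - 2))%nat by lia. rewrite pow_add.
    pose proof (pow_R1_Rle (INR n + 1) (p-2) H1).
    assert (0 < (INR n + 1)^2) by (apply pow_lt; lra). nra. }
  assert (0 < (INR n + 1)^2) by (apply pow_lt; lra). assert (0 < (INR n + 1)^p) by (apply pow_lt; lra).
  unfold Rdiv. rewrite Rabs_mult, Rabs_inv, (Rabs_pos_eq ((INR n + 1)^p)) by lra.
  apply Rle_trans with (1 * / (INR n + 1) ^ p).
  apply Rmult_le_compat_r. apply Rlt_le, Rinv_0_lt_compat; lra. apply Hc.
  rewrite Rmult_1_l. apply Rinv_le_contravar; lra.
Qed.

Lemma div2_e q : ((2*q)/2 = q)%nat.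
Proof. rewrite Nat.mul_comm. apply Nat.div_mul. lia. Qed.
Lemma div2_o q : ((2*q+1)/2 = q)%nat.
Proof. symmetry. apply (Nat.div_unique _ 2 q 1); lia. Qed.

Lemma interleave_even (a b : nat -> R) (L : R) :
  (forall p, b (2*p)%nat = a p) -> (forall p, b (2*p+1)%nat = 0) ->
  is_series a L -> is_series b L.
Proof.
  intros He Ho H.
  assert (E : forall p, sum_n b (2*p)%nat = sum_n a p /\ sum_n b (2*p+1)%nat = sum_n a p).
  { induction p.
    - simpl. rewrite !sum_O. split. apply (He 0%nat).
      rewrite sum_Sn, sum_O. pose proof (He 0%nat) as A. pose proof (Ho 0%nat) as B. simpl in A, B. rewrite A, B. unfold plus; simpl. ring.
    - destruct IHp as [_ IH2].
      assert (E1 : sum_n b (2 * S p)%nat = sum_n a (S p)).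
      { replace (2 * S p)%nat with (S (2*p+1)) by lia. rewrite sum_Sn, IH2, sum_Sn.
        replace (S (2*p+1)) with (2 * S p)%nat by lia. now rewrite He. }
      split. exact E1.
      replace (2 * S p + 1)%nat with (S (2 * S p)) by lia. rewrite sum_Sn, E1. replace (S (2 * S p)) with (2 * S p + 1)%nat by lia. rewrite Ho.
      unfold plus; simpl. ring. }
  assert (E2 : forall N, sum_n b N = sum_n a (Nat.div2 N)).
  { intros N. rewrite (Nat.div2_odd N) at 1. destruct (Nat.odd N); simpl Nat.b2n.
    - apply E. - rewrite Nat.add_0_r. apply E. }
  change (is_lim_seq (sum_n b) L).
  apply (is_lim_seq_ext (fun N => sum_n a (Nat.div2 N))). { intros; now rewrite E2. }
  apply (is_lim_seq_subseq (sum_n a) L Nat.div2). 2: exact H.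
  intros P [N HN]. exists (2*N)%nat. intros n Hn. apply HN.
  pose proof (Nat.div2_odd n). destruct (Nat.odd n); simpl in H0; lia.
Qed.

Lemma interleave_odd (a b : nat -> R) (L : R) :
  (forall p, b (2*p)%nat = 0) -> (forall p, b (2*p+1)%nat = a p) ->
  is_series a L -> is_series b L.
Proof.
  intros He Ho H. apply is_series_decr_1.
  assert (b0 : b 0%nat = 0) by (pose proof (He 0%nat) as A; simpl in A; exact A).
  rewrite b0. unfold plus, opp; simpl. rewrite Ropp_0, Rplus_0_r.
  apply (interleave_even a). intros p. now rewrite <- Ho; f_equal; lia.
  intros p. replace (S (2*p+1)) with (2 * S p)%nat by lia. apply He.
  exact H.
Qed.

Lemma sin_cos_nPI p : sin (INR p * PI) = 0 /\ cos (INR p * PI) = (-1)^p.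
Proof.
  induction p. simpl. rewrite Rmult_0_l, sin_0, cos_0. lra.
  rewrite S_INR. replace ((INR p + 1) * PI) with (INR p * PI + PI) by ring.
  rewrite neg_sin, neg_cos. destruct IHp as [-> ->]. simpl. lra.
Qed.

Lemma sin_half_e p : sin (INR (2*p) * (PI/2)) = 0.
Proof.
  replace (INR (2*p) * (PI/2)) with (INR p * PI). apply sin_cos_nPI.
  rewrite mult_INR. simpl. field.
Qed.

Lemma sin_half_o p : sin (INR (2*p+1) * (PI/2)) = (-1)^p.
Proof.
  replace (INR (2*p+1) * (PI/2)) with (INR p * PI + PI/2).
  rewrite sin_plus, sin_PI2, cos_PI2. destruct (sin_cos_nPI p) as [_ ->]. ring.
  rewrite plus_INR, mult_INR. simpl. field.
Qed.

Fixpoint PA (a : R) (r : nat) (ph t : R) : R :=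
  match r with
  | O => - cos (a * t + ph) / a
  | S r' => - t ^ (S r') * cos (a * t + ph) / a + INR (S r') / a * PA a r' (ph + PI/2) t
  end.

Lemma PA_derive a r : a <> 0 -> forall ph t,
  is_derive (PA a r ph) t (t ^ r * sin (a * t + ph)).
Proof.
  intros Ha. induction r; intros ph t.
  - simpl. auto_derive. auto. field. auto.
  - assert (H1 : is_derive (fun t => - t ^ (S r) * cos (a * t + ph) / a) t
        (- INR (S r) * t ^ r * cos (a * t + ph) / a + t ^ (S r) * sin (a * t + ph))).
    { auto_derive. auto. change (match r with 0%nat => 1 | S _ => INR r + 1 end) with (INR (S r)).
      set (k := INR (S r)). simpl. field. auto. }
    pose proof (is_derive_scal _ _ (INR (S r) / a) _ (IHr (ph + PI/2) t)) as H2.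
    pose proof (is_derive_plus _ _ _ _ _ H1 H2) as H3.
    replace (t ^ S r * sin (a*t+ph)) with (- INR (S r) * t ^ r * cos (a * t + ph) / a + t ^ S r * sin (a * t + ph) + INR (S r) / a * (t ^ r * sin (a * t + (ph + PI / 2)))).
    exact H3.
    replace (a*t+(ph+PI/2)) with ((a*t+ph)+PI/2) by ring. rewrite (sin_plus (a*t+ph) (PI/2)), sin_PI2, cos_PI2. field. auto.
Qed.

Lemma RInt_val a r : a <> 0 ->
  RInt (fun t => t ^ r * cos (a * t)) 0 (PI/2) = PA a r (PI/2) (PI/2) - PA a r (PI/2) 0.
Proof.
  intros Ha. apply is_RInt_unique.
  apply (is_RInt_ext (fun t => t ^ r * sin (a * t + PI/2))).
  { intros x _. rewrite cos_sin. f_equal. f_equal. ring. }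
  apply (is_RInt_derive (PA a r (PI/2))).
  - intros x _. apply PA_derive. exact Ha.
  - intros x _. apply (@ex_derive_continuous R_AbsRing R_NormedModule). auto_derive. auto.
Qed.

Lemma PA_at0 a r : a <> 0 -> forall ph,
  PA a r ph 0 = - INR (fact r) * cos (ph + INR r * (PI/2)) / a ^ (r+1).
Proof.
  intros Ha. induction r; intros ph.
  - simpl. replace (a * 0 + ph) with (ph + 0 * (PI/2)) by ring. field. auto.
  - cbn [PA]. rewrite IHr. rewrite fact_simpl, mult_INR.
    replace (ph + PI / 2 + INR r * (PI / 2)) with (ph + INR (S r) * (PI / 2))
      by (rewrite S_INR; ring).
    replace (S r + 1)%nat with (S (r + 1)) by lia. simpl pow.
    rewrite Rmult_0_l. field. split; auto. apply pow_nonzero. auto.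
Qed.

Definition cterm a r ph t j := INR (fact r) / INR (fact (r - j)) * t ^ (r - j)
        * cos (a * t + ph + INR j * (PI/2)) / a ^ (j + 1).

Lemma sum_n_m_mult_lR (k : R) (f : nat -> R) n m :
  sum_n_m (fun j => k * f j) n m = k * sum_n_m f n m.
Proof. apply (@sum_n_m_mult_l R_Ring). Qed.
Lemma plusR (x y : R) : plus x y = x + y.
Proof. reflexivity. Qed.

Lemma PA_closed a r : a <> 0 -> forall ph t,
  PA a r ph t = - sum_n (cterm a r ph t) r.
Proof.
  intros Ha. induction r; intros ph t.
  - rewrite sum_O. unfold cterm. simpl. replace (a*t+ph+0*(PI/2)) with (a*t+ph) by ring. field. auto.
  - cbn [PA]. rewrite IHr. unfold sum_n.
    rewrite (sum_Sn_m (cterm a (S r) ph t) 0 (S r)) by lia.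
    rewrite <- (sum_n_m_S (cterm a (S r) ph t) 0 r).
    rewrite (sum_n_m_ext_loc (fun j => cterm a (S r) ph t (S j))
      (fun j => INR (S r)/a * cterm a r (ph+PI/2) t j)).
    2:{ intros j Hj. unfold cterm.
        replace (a * t + ph + INR (S j) * (PI / 2)) with (a * t + (ph + PI / 2) + INR j * (PI / 2))
          by (rewrite S_INR; ring).
        replace (S r - S j)%nat with (r - j)%nat by lia.
        rewrite fact_simpl, mult_INR. replace (S j + 1)%nat with (S (j + 1)) by lia. simpl pow.
        change (match r with 0%nat => 1 | S _ => INR r + 1 end) with (INR (S r)). match goal with |- ?x = ?y => change (@eq R x y) end. field. repeat split; try apply pow_nonzero; try apply INR_fact_neq_0; auto. }
    rewrite (sum_n_m_mult_lR (INR (S r)/a) (cterm a r (ph+PI/2) t) 0 r). unfold plus. simpl AbelianMonoid.plus. change (match r with 0%nat => 1 | S _ => INR r + 1 end) with (INR (S r)).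
    set (SS := sum_n_m (cterm a r (ph + PI/2) t) 0 r).
    unfold cterm at 1.
    rewrite !Nat.sub_0_r.
    replace (INR (fact (S r))) with (INR (S r) * INR (fact r)) by (rewrite <- mult_INR; reflexivity).
    replace (a * t + ph + INR 0 * (PI / 2)) with (a * t + ph) by (simpl; ring).
    replace (0 + 1)%nat with 1%nat by reflexivity.
    match goal with |- ?x = ?y => change (@eq R x y) end. field. repeat split; try apply pow_nonzero; try apply INR_fact_neq_0; auto. apply not_0_INR; lia.
Qed.

Definition sj (j n : nat) : R := (-1) ^ n * sin (INR (n + 1 + j) * (PI/2)) / (INR n + 1) ^ (j + 2).
Definition Kj (r j : nat) : R := INR (fact r) / INR (fact (r - j)) * (PI/2) ^ (r - j).

Lemma sum_n_mult_lR (k : R) (f : nat -> R) n :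
  sum_n (fun j => k * f j) n = k * sum_n f n.
Proof. apply sum_n_m_mult_lR. Qed.

Lemma summand_eq r n :
  (-1) ^ n / (INR n + 1) * RInt (fun t => t ^ r * cos ((INR n + 1) * t)) 0 (PI / 2)
  = sum_n (fun j => Kj r j * sj j n) r
    + (- (INR (fact r) * sin (INR r * PI / 2))) * ((-1) ^ n / (INR n + 1) ^ (r + 2)).
Proof.
  set (a := INR n + 1).
  assert (Ha : a <> 0) by (unfold a; pose proof (pos_INR n); lra).
  rewrite RInt_val by exact Ha. rewrite PA_closed by exact Ha. rewrite PA_at0 by exact Ha.
  rewrite (sum_n_ext (fun j => Kj r j * sj j n) (fun j => (- (-1)^n / a) * cterm a r (PI/2) (PI/2) j)).
  2:{ intros j. unfold Kj, sj, cterm.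
      replace (a * (PI / 2) + PI / 2 + INR j * (PI / 2)) with (PI/2 + INR (n + 1 + j) * (PI / 2))
        by (unfold a; rewrite !plus_INR; simpl; ring).
      rewrite <- (Ropp_involutive (cos _)), <- sin_cos. fold a.
      replace (j + 2)%nat with (S (j + 1)) by lia. simpl pow.
      match goal with |- ?x = ?y => change (@eq R x y) end. field. repeat split; try apply pow_nonzero; try apply INR_fact_neq_0; auto. }
  rewrite sum_n_mult_lR.
  replace (PI / 2 + INR r * (PI / 2)) with (PI/2 + INR r * PI / 2) by field.
  rewrite <- (Ropp_involutive (cos (PI/2 + _))), <- sin_cos.
  replace (r + 2)%nat with (S (r + 1)) by lia. simpl pow.
  field. split; auto. apply pow_nonzero; auto.
Qed.

Lemma is_series_scal_lR (k : R) (f : nat -> R) L :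
  is_series f L -> is_series (fun n => k * f n) (k * L).
Proof. apply (is_series_scal_l k f L). Qed.

Lemma beta_series p : (2 <= p)%nat ->
  is_series (fun m => (-1) ^ m / (2 * INR m + 1) ^ p) (dbeta (INR p)).
Proof.
  intros Hp.
  assert (E : forall m, (-1) ^ m / Rpower (2 * INR m + 1) (INR p) = (-1) ^ m / (2 * INR m + 1) ^ p).
  { intros m. rewrite Rpower_pow. reflexivity. pose proof (pos_INR m). lra. }
  apply (is_series_ext (fun m => (-1) ^ m / Rpower (2 * INR m + 1) (INR p))). exact E.
  apply Series_correct.
  apply (ex_series_ext (fun m => (-1) ^ m / (2 * INR m + 1) ^ p)). { intros; now rewrite E. }
  apply (@ex_series_le R_AbsRing R_CompleteNormedModule _ (fun n => / (INR n + 1) ^ 2)).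
  2: apply ex_series_inv_sq.
  intros n. unfold norm; simpl. pose proof (pos_INR n).
  assert (H1 : 1 <= 2 * INR n + 1) by lra.
  assert (H2 : (2 * INR n + 1) ^ 2 <= (2 * INR n + 1) ^ p).
  { replace p with (2 + (p - 2))%nat by lia. rewrite pow_add.
    pose proof (pow_R1_Rle (2 * INR n + 1) (p-2) H1).
    assert (0 < (2 * INR n + 1)^2) by (apply pow_lt; lra). nra. }
  assert (0 < (INR n + 1)^2) by (apply pow_lt; lra).
  assert (0 < (2 * INR n + 1)^p) by (apply pow_lt; lra).
  assert ((INR n + 1)^2 <= (2 * INR n + 1)^2) by (simpl; nra).
  unfold Rdiv. rewrite Rabs_mult, Rabs_inv, (Rabs_pos_eq ((2 * INR n + 1)^p)) by lra.
  rewrite pow_1_abs, Rmult_1_l. apply Rinv_le_contravar; lra.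
Qed.

Lemma zeta_series p : (2 <= p)%nat ->
  is_series (fun m => (-1) ^ m / (INR m + 1) ^ p) (zetaE (INR p)).
Proof.
  intros Hp.
  assert (E : forall m, (-1) ^ m / Rpower (INR m + 1) (INR p) = (-1) ^ m / (INR m + 1) ^ p).
  { intros m. rewrite Rpower_pow. reflexivity. pose proof (pos_INR m). lra. }
  apply (is_series_ext (fun m => (-1) ^ m / Rpower (INR m + 1) (INR p))). exact E.
  apply Series_correct.
  apply (ex_series_ext (fun m => (-1) ^ m / (INR m + 1) ^ p)). { intros; now rewrite E. }
  apply ex_series_pow. exact Hp. intros n. rewrite pow_1_abs. lra.
Qed.

Lemma S_even k : is_series (sj (2 * k)) ((-1) ^ k * dbeta (INR (2 * k + 2))).
Proof.
  apply (interleave_even (fun m => (-1) ^ k * ((-1) ^ m / (2 * INR m + 1) ^ (2 * k + 2)))).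
  - intros m. unfold sj.
    replace (2 * m + 1 + 2 * k)%nat with (2 * (m + k) + 1)%nat by lia.
    rewrite sin_half_o, pow_1_even, pow_add.
    replace (INR (2 * m)) with (2 * INR m) by (rewrite mult_INR; simpl; ring).
    field. pose proof (pos_INR m). apply pow_nonzero. lra.
  - intros m. unfold sj.
    replace (2 * m + 1 + 1 + 2 * k)%nat with (2 * (m + k + 1))%nat by lia.
    rewrite sin_half_e. unfold Rdiv. ring.
  - apply is_series_scal_lR. apply beta_series. lia.
Qed.

Lemma S_odd k : is_series (sj (2 * k + 1)) ((-1) ^ k / 2 ^ (2 * k + 3) * zetaE (INR (2 * k + 3))).
Proof.
  apply (interleave_odd (fun m => (-1) ^ k / 2 ^ (2 * k + 3) * ((-1) ^ m / (INR m + 1) ^ (2 * k + 3)))).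
  - intros m. unfold sj.
    replace (2 * m + 1 + (2 * k + 1))%nat with (2 * (m + k + 1))%nat by lia.
    rewrite sin_half_e. unfold Rdiv. ring.
  - intros m. unfold sj.
    replace (2 * m + 1 + 1 + (2 * k + 1))%nat with (2 * (m + k + 1) + 1)%nat by lia.
    rewrite sin_half_o.
    replace (2 * m + 1)%nat with (S (2 * m)) by lia. rewrite pow_1_odd.
    replace (INR (S (2 * m)) + 1) with (2 * (INR m + 1)) by (rewrite S_INR, mult_INR; simpl; ring).
    replace (2 * k + 1 + 2)%nat with (2 * k + 3)%nat by lia.
    rewrite Rpow_mult_distr, !pow_add. simpl pow.
    field. pose proof (pos_INR m). repeat split; try apply pow_nonzero; lra.
  - apply is_series_scal_lR. apply zeta_series. lia.
Qed.

Definition Sv (j : nat) : R :=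
  if Nat.even j then (-1) ^ (j / 2) * dbeta (INR (j + 2))
  else (-1) ^ (j / 2) / 2 ^ (j + 2) * zetaE (INR (j + 2)).

Lemma S_all j : is_series (sj j) (Sv j).
Proof.
  destruct (Nat.Even_or_Odd j) as [[k Hk] | [k Hk]]; subst j; unfold Sv.
  - rewrite Nat.even_even, div2_e. apply S_even.
  - rewrite Nat.even_odd, div2_o. replace (2 * k + 1 + 2)%nat with (2 * k + 3)%nat by lia.
    apply S_odd.
Qed.

Lemma is_series_plusR (f g : nat -> R) a b :
  is_series f a -> is_series g b -> is_series (fun n => f n + g n) (a + b).
Proof. intros. apply (is_series_plus f g a b); assumption. Qed.

Lemma is_series_sum_n (g : nat -> nat -> R) (L : nat -> R) r :
  (forall j, is_series (g j) (L j)) ->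
  is_series (fun n => sum_n (fun j => g j n) r) (sum_n L r).
Proof.
  intros H. induction r.
  - rewrite sum_O. apply (is_series_ext (g 0%nat)). intros; now rewrite sum_O. apply H.
  - rewrite sum_Sn. apply (is_series_ext (fun n => sum_n (fun j => g j n) r + g (S r) n)).
    intros; now rewrite sum_Sn. apply is_series_plusR. exact IHr. apply H.
Qed.

Lemma sum_n_Sm_R (a : nat -> R) n m : (n <= S m)%nat -> sum_n_m a n (S m) = sum_n_m a n m + a (S m).
Proof. intros H. apply (sum_n_Sm a n m H). Qed.

Lemma sum_split (f : nat -> R) r :
  sum_n f r = sum_n_m (fun k => f (2 * k)%nat) 0 (r / 2)
            + sum_n_m (fun k => f (2 * k - 1)%nat) 1 ((r + 1) / 2).
Proof.
  induction r.
  - rewrite sum_O. simpl. rewrite sum_n_n. rewrite sum_n_m_zero by lia. simpl. unfold zero; simpl. ring.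
  - rewrite sum_Sn, IHr. rewrite plusR.
    destruct (Nat.Even_or_Odd r) as [[q Hq] | [q Hq]]; subst r.
    + assert (e1 : ((2*q)/2 = q)%nat) by apply div2_e.
      assert (e2 : ((2*q+1)/2 = q)%nat) by apply div2_o.
      assert (e3 : ((S (2*q))/2 = q)%nat) by (rewrite <- e2; f_equal; lia).
      assert (e4 : ((S (2*q)+1)/2 = S q)%nat) by (rewrite <- (div2_e (S q)); f_equal; lia).
      rewrite e1, e2, e3, e4.
      rewrite (sum_n_Sm_R _ 1 q) by lia.
      replace (2 * S q - 1)%nat with (S (2 * q)) by lia. match goal with |- ?x = ?y => change (@eq R x y) end. ring.
    + assert (e1 : ((2*q+1)/2 = q)%nat) by apply div2_o.
      assert (e2 : ((2*q+1+1)/2 = S q)%nat) by (rewrite <- (div2_e (S q)); f_equal; lia).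
      assert (e3 : ((S (2*q+1))/2 = S q)%nat) by (rewrite <- (div2_e (S q)); f_equal; lia).
      assert (e4 : ((S (2*q+1)+1)/2 = S q)%nat) by (rewrite <- (div2_o (S q)); f_equal; lia).
      rewrite e1, e2, e3, e4.
      rewrite (sum_n_Sm_R _ 0 q) by lia.
      replace (2 * S q)%nat with (S (2 * q + 1)) by lia. match goal with |- ?x = ?y => change (@eq R x y) end. ring.
Qed.

Theorem lemma4p2 (r : nat) :
  is_series
    (fun n : nat =>
       (-1) ^ n / (INR n + 1) *
       RInt (fun t => t ^ r * cos ((INR n + 1) * t)) 0 (PI / 2))
    (sum_n_m (fun k : nat =>
        (-1) ^ k * INR (fact (2 * k)%nat) * Binomial.C r (2 * k)%nat
        * (PI / 2) ^ (r - 2 * k)%nat * dbeta (INR (2 * k + 2)%nat))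
       0 (r / 2)%nat
     + sum_n_m (fun k : nat =>
        (-1) ^ (k - 1)%nat * INR (fact (2 * k - 1)%nat) / 2 ^ (2 * k + 1)%nat
        * Binomial.C r (2 * k - 1)%nat
        * (PI / 2) ^ (r + 1 - 2 * k)%nat * zetaE (INR (2 * k + 1)%nat))
       1 ((r + 1) / 2)%nat
     - INR (fact r) * sin (INR r * PI / 2) * zetaE (INR (r + 2)%nat)).
Proof.
  apply (is_series_ext (fun n => sum_n (fun j => Kj r j * sj j n) r
    + (- (INR (fact r) * sin (INR r * PI / 2))) * ((-1) ^ n / (INR n + 1) ^ (r + 2)))).
  { intros n. symmetry. apply summand_eq. }
  assert (E : sum_n (fun j => Kj r j * Sv j) r =
     sum_n_m (fun k : nat =>
        (-1) ^ k * INR (fact (2 * k)%nat) * Binomial.C r (2 * k)%nat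
        * (PI / 2) ^ (r - 2 * k)%nat * dbeta (INR (2 * k + 2)%nat))
       0 (r / 2)%nat
     + sum_n_m (fun k : nat =>
        (-1) ^ (k - 1)%nat * INR (fact (2 * k - 1)%nat) / 2 ^ (2 * k + 1)%nat
        * Binomial.C r (2 * k - 1)%nat
        * (PI / 2) ^ (r + 1 - 2 * k)%nat * zetaE (INR (2 * k + 1)%nat))
       1 ((r + 1) / 2)%nat).
  { rewrite sum_split. f_equal.
    - apply sum_n_m_ext_loc. intros k Hk. unfold Kj, Sv, Binomial.C.
      rewrite Nat.even_even, div2_e.
      match goal with |- ?x = ?y => change (@eq R x y) end. field. split; apply INR_fact_neq_0.
    - apply sum_n_m_ext_loc. intros k Hk. destruct k as [|k]. lia.
      replace (2 * S k - 1)%nat with (2 * k + 1)%nat by lia.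
      replace (S k - 1)%nat with k by lia.
      replace (r + 1 - 2 * S k)%nat with (r - (2 * k + 1))%nat by lia.
      replace (2 * S k + 1)%nat with (2 * k + 1 + 2)%nat by lia.
      unfold Kj, Sv, Binomial.C.
      rewrite Nat.even_odd, div2_o.
      match goal with |- ?x = ?y => change (@eq R x y) end. field. repeat split; try apply INR_fact_neq_0; apply pow_nonzero; lra. }
  rewrite <- E.
  replace (sum_n (fun j => Kj r j * Sv j) r - INR (fact r) * sin (INR r * PI / 2) * zetaE (INR (r + 2)))
    with (sum_n (fun j => Kj r j * Sv j) r + (- (INR (fact r) * sin (INR r * PI / 2))) * zetaE (INR (r + 2)))
    by ring.
  apply is_series_plusR.
  - apply is_series_sum_n. intros j. apply is_series_scal_lR. apply S_all.
  - apply is_series_scal_lR. apply zeta_series. lia.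
Qed.
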